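(* Let $\phi=\tilde p/p$ be an irreducible rational inner function on $\mathbb{D}^3$ of degree $(m,n,1)$ with $p(z)=p_1(z_1,z_2)+z_3p_2(z_1,z_2)$, $\tilde p(z)=z_3\tilde p_1(z_1,z_2)+\tilde p_2(z_1,z_2)$, and suppose $\mathcal{Z}_p\cap\mathbb{T}^3$ is finite. Then for each $(\tau_1,\tau_2,\zeta_3)\in\mathcal{Z}_p\cap\mathbb{T}^3$, \[\phi^*(\tau_1,\tau_2,\tau_3)=\frac{\tilde p_2(\tau_1,\tau_2)}{p_1(\tau_1,\tau_2)}\in\mathbb{T}\quad\text{for all }\tau_3\in\mathbb{T},\] where $\phi^*$ denotes the nontangential limit of $\phi$.
   Context: A rational inner function (RIF) on $\mathbb{D}^3$ is a rational function holomorphic on the tridisk with unimodular radial limits a.e. on $\mathbb{T}^3$; it is written $\phi=\tilde p/p$ with $p$ zero-free on $\mathbb{D}^3$, $p,\tilde p$ without common factors. For degree $(m,n,1)$, $\tilde p(z)=z_1^mz_2^nz_3\overline{p(1/\bar z_1,1/\bar z_2,1/\bar z_3)}$ and $\tilde p_j(z_1,z_2)=z_1^mz_2^n\overline{p_j(1/\bar z_1,1/\bar z_2)}$. The nontangential limit $\phi^*(\tau)$ at $\tau\in\mathbb{T}^3$ is the limit as $z\to\tau$ in $\mathbb{D}^3$ with $\|z-\tau\|\le C(1-\|z\|)$; it exists and is unimodular at every $\tau\in\mathbb{T}^3$ for every RIF. $\mathcal{Z}_p$ is the zero set of $p$. *)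

(* Defs.v *)
From HB Require Import structures.
From mathcomp Require Import all_boot all_order all_algebra.
From mathcomp Require Import complex reals.
Set Implicit Arguments. Unset Strict Implicit. Unset Printing Implicit Defensive.
Import Order.TTheory GRing.Theory Num.Theory.
Local Open Scope ring_scope.
Local Open Scope complex_scope.

Section Defs.
Variable R : realType.
Local Notation C := (R[i]).

(* A polynomial of multidegree <= (m,n,1) in (z1,z2,z3), given by its
   coefficients: p(z) = sum_{i,j,k} a i j k z1^i z2^j z3^k. *)
Definition coef3 (m n : nat) := 'I_m.+1 -> 'I_n.+1 -> 'I_2 -> C.

Definition peval3 m n (a : coef3 m n) (z1 z2 z3 : C) : C :=
  \sum_(i < m.+1) \sum_(j < n.+1) \sum_(k < 2)
     a i j k * z1 ^+ i * z2 ^+ j * z3 ^+ k.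

(* reflection at degree (m,n,1):
   tilde p(z) = z1^m z2^n z3 * conj(p(1/conj z1, 1/conj z2, 1/conj z3)),
   written on coefficients. *)
Definition refl3 m n (a : coef3 m n) : coef3 m n :=
  fun i j k => (a (rev_ord i) (rev_ord j) (rev_ord k))^*.

(* the bivariate pieces: p(z) = p_1(z1,z2) + z3 p_2(z1,z2);
   pk a k is the coefficient of z3^k, so p_1 = pk a 0, p_2 = pk a 1,
   and tilde p_2 = pk (refl3 a) 0 (tilde p = z3 tilde p_1 + tilde p_2). *)
Definition pk m n (a : coef3 m n) (k : 'I_2) (z1 z2 : C) : C :=
  \sum_(i < m.+1) \sum_(j < n.+1) a i j k * z1 ^+ i * z2 ^+ j.

(* the same polynomial as an element of C[z1][z2][z3] (innermost variable z1) *)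
Definition poly3 m n (a : coef3 m n) : {poly {poly {poly C}}} :=
  \sum_(i < m.+1) \sum_(j < n.+1) \sum_(k < 2)
     (a i j k)%:P%:P%:P * ('X^i)%:P%:P * ('X^j)%:P * 'X^k.

Definition no_common_factor m n (a : coef3 m n) : Prop :=
  forall q r1 r2 : {poly {poly {poly C}}},
    poly3 a = q * r1 -> poly3 (refl3 a) = q * r2 -> q \is a GRing.unit.

Definition phi3 m n (a : coef3 m n) (z1 z2 z3 : C) : C :=
  peval3 (refl3 a) z1 z2 z3 / peval3 a z1 z2 z3.

Definition nrm3 (z1 z2 z3 : C) : C := Num.max `|z1| (Num.max `|z2| `|z3|).

Definition nt_limit (f : C -> C -> C -> C) (t1 t2 t3 L : C) : Prop :=
  forall c : C, 0 < c -> forall eps : C, 0 < eps ->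
  exists2 d : C, 0 < d &
    forall z1 z2 z3 : C, `|z1| < 1 -> `|z2| < 1 -> `|z3| < 1 ->
      nrm3 (z1 - t1) (z2 - t2) (z3 - t3) <= c * (1 - nrm3 z1 z2 z3) ->
      nrm3 (z1 - t1) (z2 - t2) (z3 - t3) < d ->
      `|f z1 z2 z3 - L| < eps.

End Defs.

(* Main.v *)
Require Import Defs.
From HB Require Import structures.
From mathcomp Require Import all_boot all_order all_algebra.
From mathcomp Require Import complex reals ring.
Import Order.TTheory GRing.Theory Num.Theory.
Local Open Scope ring_scope.
Local Open Scope complex_scope.

Section Aux.
Variable R : realType.
Local Notation C := (R[i]).

Lemma conjcE (x : C) : x^*%C = (x^*)%R. Proof. by []. Qed.

Lemma peval3E m n (b : coef3 R m n) z1 z2 z3 :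
  peval3 b z1 z2 z3 = pk b 0 z1 z2 + z3 * pk b 1 z1 z2.
Proof.
rewrite /peval3 /pk mulr_sumr -big_split; apply: eq_bigr => i _.
rewrite mulr_sumr -big_split; apply: eq_bigr => j _.
rewrite big_ord_recr big_ord1 /= expr0 expr1 mulr1.
have -> : (widen_ord (leqnSn 1) ord0) = (0 : 'I_2) by apply/val_inj.
have -> : (ord_max : 'I_2) = (1 : 'I_2) by apply/val_inj.
by rewrite [z3 * _]mulrC.
Qed.

Lemma pk_refl m n (b : coef3 R m n) k (w1 w2 : C) :
  `|w1| = 1 -> `|w2| = 1 ->
  pk (refl3 b) k w1 w2 = w1 ^+ m * w2 ^+ n * ((pk b (rev_ord k) w1 w2)^*)%R.
Proof.
move=> h1 h2.
have c1 : (w1^*)%R * w1 = 1 by rewrite -normCKC h1 expr1n.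
have c2 : (w2^*)%R * w2 = 1 by rewrite -normCKC h2 expr1n.
rewrite /pk /refl3 rmorph_sum mulr_sumr.
rewrite (reindex_inj rev_ord_inj) /=; apply: eq_bigr => i _.
rewrite rmorph_sum mulr_sumr.
rewrite (reindex_inj rev_ord_inj) /=; apply: eq_bigr => j _.
rewrite !rev_ordK !rmorphM !rmorphXn /=.
have e1 : w1 ^+ m = w1 ^+ (m - i) * w1 ^+ i.
  by rewrite -exprD subnK // -ltnS.
have e2 : w2 ^+ n = w2 ^+ (n - j) * w2 ^+ j.
  by rewrite -exprD subnK // -ltnS.
rewrite e1 e2.
have f1 : w1 ^+ i * (w1^*)%R ^+ i = 1 by rewrite -exprMn mulrC c1 expr1n.
have f2 : w2 ^+ j * (w2^*)%R ^+ j = 1 by rewrite -exprMn mulrC c2 expr1n.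
rewrite conjcE.
rewrite !subSS -[LHS]mulr1 -{1}f1 -[LHS]mulr1 -{1}f2; ring.
Qed.

Section Taylor.
Variables t1 t2 : C.

Definition T2 (f : C -> C -> C) : Prop :=
  exists a1 a2 K : C, 0 <= K /\ forall u1 u2 : C, `|u1| + `|u2| <= 1 ->
   `|f (t1 + u1) (t2 + u2) - f t1 t2 - (a1 * u1 + a2 * u2)|
      <= K * (`|u1| + `|u2|) ^+ 2.

Lemma T2_ext f g : (forall x y, f x y = g x y) -> T2 f -> T2 g.
Proof.
move=> e [a1 [a2 [K [K0 H]]]]; exists a1, a2, K; split=> // u1 u2 hu.
by rewrite -!e; apply: H.
Qed.

Lemma T2_const c : T2 (fun _ _ => c).
Proof.
exists 0, 0, 0; split=> // u1 u2 _.
have -> : c - c - (0 * u1 + 0 * u2) = 0 by ring.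
by rewrite normr0 mul0r.
Qed.

Lemma T2_x : T2 (fun x _ => x).
Proof.
exists 1, 0, 0; split=> // u1 u2 _.
have -> : t1 + u1 - t1 - (1 * u1 + 0 * u2) = 0 by ring.
by rewrite normr0 mul0r.
Qed.

Lemma T2_y : T2 (fun _ y => y).
Proof.
exists 0, 1, 0; split=> // u1 u2 _.
have -> : t2 + u2 - t2 - (0 * u1 + 1 * u2) = 0 by ring.
by rewrite normr0 mul0r.
Qed.

Lemma sq_le (d : C) : 0 <= d -> d <= 1 -> d ^+ 2 <= d.
Proof.
move=> d0 d1; rewrite expr2; exact: ler_piMr.
Qed.

Lemma T2_lip f : T2 f -> exists K : C, 0 <= K /\ forall u1 u2 : C,
  `|u1| + `|u2| <= 1 -> `|f (t1 + u1) (t2 + u2) - f t1 t2| <= K * (`|u1| + `|u2|).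
Proof.
move=> [a1 [a2 [K [K0 H]]]].
exists (K + (`|a1| + `|a2|)); split; first by rewrite !addr_ge0.
move=> u1 u2 hu.
have d0 : 0 <= `|u1| + `|u2| by rewrite addr_ge0.
rewrite -[f _ _ - _](subrK (a1 * u1 + a2 * u2)).
apply: le_trans (ler_normD _ _) _.
rewrite mulrDl; apply: lerD.
  apply: le_trans (H _ _ hu) _; apply: ler_wpM2l => //; exact: sq_le.
apply: le_trans (ler_normD _ _) _; rewrite !normrM mulrDl.
apply: lerD.
  apply: ler_wpM2l => //; by rewrite lerDl.
apply: ler_wpM2l => //; by rewrite lerDr.
Qed.

Lemma T2_add f g : T2 f -> T2 g -> T2 (fun x y => f x y + g x y).
Proof.
move=> [a1 [a2 [K [K0 H]]]] [b1 [b2 [L [L0 G]]]].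
exists (a1 + b1), (a2 + b2), (K + L); split; first by rewrite addr_ge0.
move=> u1 u2 hu.
have -> : f (t1 + u1) (t2 + u2) + g (t1 + u1) (t2 + u2) - (f t1 t2 + g t1 t2)
   - ((a1 + b1) * u1 + (a2 + b2) * u2) =
  (f (t1 + u1) (t2 + u2) - f t1 t2 - (a1 * u1 + a2 * u2)) +
  (g (t1 + u1) (t2 + u2) - g t1 t2 - (b1 * u1 + b2 * u2)) by ring.
apply: le_trans (ler_normD _ _) _; rewrite mulrDl; apply: lerD; [exact: H | exact: G].
Qed.

Lemma T2_mul f g : T2 f -> T2 g -> T2 (fun x y => f x y * g x y).
Proof.
move=> hf hg.
have [Lf [Lf0 HLf]] := T2_lip _ hf; have [Lg [Lg0 HLg]] := T2_lip _ hg.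
move: hf hg => [a1 [a2 [K [K0 H]]]] [b1 [b2 [L [L0 G]]]].
exists (f t1 t2 * b1 + g t1 t2 * a1), (f t1 t2 * b2 + g t1 t2 * a2),
  (`|f t1 t2| * L + `|g t1 t2| * K + Lf * Lg).
split; first by rewrite !addr_ge0 ?mulr_ge0.
move=> u1 u2 hu.
have -> : f (t1 + u1) (t2 + u2) * g (t1 + u1) (t2 + u2) - f t1 t2 * g t1 t2
   - ((f t1 t2 * b1 + g t1 t2 * a1) * u1 + (f t1 t2 * b2 + g t1 t2 * a2) * u2) =
  f t1 t2 * (g (t1 + u1) (t2 + u2) - g t1 t2 - (b1 * u1 + b2 * u2)) +
  g t1 t2 * (f (t1 + u1) (t2 + u2) - f t1 t2 - (a1 * u1 + a2 * u2)) +
  (f (t1 + u1) (t2 + u2) - f t1 t2) * (g (t1 + u1) (t2 + u2) - g t1 t2) by ring.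
rewrite [X in _ <= X]mulrDl; apply: le_trans (ler_normD _ _) _; apply: lerD.
  rewrite [X in _ <= X]mulrDl; apply: le_trans (ler_normD _ _) _; apply: lerD.
    rewrite normrM -mulrA; apply: ler_wpM2l => //; exact: G.
  rewrite normrM -mulrA; apply: ler_wpM2l => //; exact: H.
rewrite normrM expr2 mulrACA; apply: ler_pM => //; [exact: HLf | exact: HLg].
Qed.

Lemma T2_exp f k : T2 f -> T2 (fun x y => f x y ^+ k).
Proof.
move=> hf; elim: k => [|k IH].
  apply: (T2_ext (fun _ _ => 1)) => [x y|]; [by rewrite expr0 | exact: T2_const].
apply: (T2_ext (fun x y => f x y ^+ k * f x y)) => [x y|]; first by rewrite exprSr.
exact: T2_mul.
Qed.

Lemma T2_sum N (F : 'I_N -> C -> C -> C) : (forall i, T2 (F i)) ->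
  T2 (fun x y => \sum_(i < N) F i x y).
Proof.
elim: N F => [|N IH] F HF.
  apply: (T2_ext (fun _ _ => 0)) => [x y|]; [by rewrite big_ord0 | exact: T2_const].
apply: (T2_ext (fun x y => \sum_(i < N) F (widen_ord (leqnSn N) i) x y + F ord_max x y)).
  by move=> x y; rewrite big_ord_recr.
apply: T2_add; last exact: HF.
exact: (IH (fun i => F (widen_ord (leqnSn N) i))).
Qed.

Lemma T2_pk m n (b : coef3 R m n) k : T2 (pk b k).
Proof.
apply: T2_sum => i; apply: T2_sum => j; apply: T2_mul; last exact: (T2_exp _ _ T2_y).
apply: T2_mul; [exact: T2_const | exact: (T2_exp _ _ T2_x)].
Qed.

End Taylor.

Lemma small_le (x K : C) : 0 <= K ->
  (forall s, 0 < s -> s * 2 <= 1 -> x <= K * s) -> x <= 0.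
Proof.
move=> K0 H; apply/ler_addgt0Pr => e e0; rewrite add0r.
have e20 : 0 < e * 2 by rewrite mulr_gt0.
have D0 : 0 < K + 1 + e * 2.
  by rewrite addr_gt0 // ltr_wpDl.
apply: le_trans (H (e / (K + 1 + e * 2)) _ _) _.
- by rewrite divr_gt0.
- by rewrite mulrAC ler_pdivrMr // mul1r lerDr addr_ge0.
- rewrite mulrA ler_pdivrMr // mulrC; apply: ler_wpM2l; first exact: ltW.
  by rewrite -addrA lerDl addr_ge0 // ltW.
Qed.

Lemma powdiff (x y : C) k : `|x| <= 1 -> `|y| <= 1 ->
  `|x ^+ k - y ^+ k| <= k%:R * `|x - y|.
Proof.
move=> hx hy; elim: k => [|k IH]; first by rewrite !expr0 subrr normr0 mul0r.
have -> : x ^+ k.+1 - y ^+ k.+1 = x * (x ^+ k - y ^+ k) + (x - y) * y ^+ k.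
  by rewrite !exprS; ring.
apply: le_trans (ler_normD _ _) _; rewrite [k.+1%:R]mulrSr [X in _ <= X]mulrDl mul1r; apply: lerD.
  rewrite normrM; apply: le_trans (ler_wpM2r (normr_ge0 _) hx) _; rewrite mul1r; exact: IH.
rewrite normrM normrX; apply: ler_piMr => //; exact: exprn_ile1.
Qed.

Lemma beta_zero (b K : C) : 0 <= K ->
  (forall s, 0 < s -> s * 2 <= 1 -> exists x y, [/\ 0 <= x, 0 <= y,
     `|x - b * s| <= K * s ^+ 2 & `|y + b * s| <= K * s ^+ 2]) -> b = 0.
Proof.
move=> K0 H; apply/eqP; rewrite -normr_le0.
apply: (small_le _ (K * 3)); first by rewrite mulr_ge0.
move=> s s0 s2; have [x [y [x0 y0 hx hy]]] := H s s0 s2.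
rewrite -(ler_pM2r s0).
have e2 : `|x + y| <= K * s ^+ 2 + K * s ^+ 2.
  have -> : x + y = (x - b * s) + (y + b * s) by ring.
  apply: le_trans (ler_normD _ _) _; exact: lerD.
have e1 : `|b * s| <= K * s ^+ 2 + `|x + y|.
  have -> : b * s = - (x - b * s) + x by ring.
  apply: le_trans (ler_normD _ _) _; rewrite normrN; apply: lerD => //.
  by rewrite (ger0_norm x0) ger0_norm ?addr_ge0 // lerDl.
rewrite normrM (gtr0_norm s0) in e1.
apply: le_trans e1 _; apply: le_trans (lerD (lexx _) e2) _.
rewrite le_eqVlt; apply/orP; left; apply/eqP; ring.
Qed.


Lemma deriv_zero (h : C -> C) (t al K : C) (m : nat) : `|t| = 1 -> 0 <= K ->
  (forall u, `|u| <= 1 -> `|h (t + u) - al * u| <= K * `|u| ^+ 2) ->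
  (forall z, `|z| = 1 -> 0 <= (z^*)%R ^+ m * h z) -> al = 0.
Proof.
move=> t1 K0 H G.
have tn0 : t != 0 by rewrite -normr_eq0 t1 oner_eq0.
have tc1 : `|(t^*)%R ^+ m| = 1 by rewrite normrX norm_conjC t1 expr1n.
pose be := (t^*)%R ^+ m * al * (2 * 'i * t).
pose K' := m%:R * (`|al| + K) * 4 + K * 4 + `|al| * 2.
pose g := fun sg : C => let v := 1 - 'i * sg in let z := t * (1 + 'i * sg) / v in
   ((z^*)%R ^+ m * h z).
have K'0 : 0 <= K' by rewrite !addr_ge0 ?mulr_ge0 ?addr_ge0.
have Hg : forall sg : C, sg \is Num.real -> `|sg| * 2 <= 1 ->
    0 <= g sg /\ `|g sg - be * sg| <= K' * sg ^+ 2.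
  move=> sg sr s2.
  pose v := 1 - 'i * sg.
  have nv : `|v| ^+ 2 = 1 + sg ^+ 2.
    rewrite /v -mulrN normC2_rect ?expr1n ?sqrrN // ?rpredN //.
  have v1 : 1 <= `|v|.
    by rewrite -(expr_ge1 (n := 2)) // nv lerDl -(real_normK sr) exprn_ge0.
  have vn0 : v != 0 by rewrite -normr_eq0; apply/eqP => e; move: v1; rewrite e ler10.
  have w1 : `|1 + 'i * sg| = `|v|.
    have -> : 1 + 'i * sg = (v^*)%R.
      by rewrite /v rmorphB rmorph1 rmorphM /= conjCi (conj_Creal sr) mulNr opprK.
    exact: norm_conjC.
  pose z := t * (1 + 'i * sg) / v.
  have z1 : `|z| = 1.
    by rewrite /z normrM normfV normrM t1 mul1r w1 mulfV // normr_eq0.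
  pose u := z - t.
  have ue : u = t * (2 * 'i * sg) / v.
    by rewrite /u /z /v; field; exact: vn0.
  have ue2 : u - 2 * 'i * sg * t = 2 * t * ('i * 'i) * sg ^+ 2 / v.
    by rewrite ue /v; field; exact: vn0.
  rewrite mulCii in ue2.
  have gz : g sg = (z^*)%R ^+ m * h z by [].
  split; first by rewrite gz; exact: G.
  have v0 : 0 < `|v| by apply: lt_le_trans v1; exact: ltr01.
  have us : `|u| <= `|sg| * 2.
    rewrite ue normrM normfV normrM t1 mul1r ler_pdivrMr //.
    have -> : `|2 * 'i * sg| = `|sg| * 2.
      by rewrite !normrM normCi mulr1 mulrC normr_nat.
    by apply: ler_peMr => //; rewrite mulr_ge0.
  have u1 : `|u| <= 1 := le_trans us s2.
  have hu : `|h z - al * u| <= K * `|u| ^+ 2.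
    by have := H u u1; rewrite /u [t + _]addrC subrK.
  have hz : `|h z| <= (`|al| + K) * `|u|.
    rewrite -[h z](subrK (al * u)); apply: le_trans (ler_normD _ _) _.
    rewrite mulrDl addrC; apply: lerD; first by rewrite normrM.
    apply: le_trans hu _; apply: ler_wpM2l => //; exact: sq_le.
  have hc : `|(z^*)%R ^+ m - (t^*)%R ^+ m| <= m%:R * `|u|.
    apply: le_trans (powdiff _ _ _ _ _) _.
    - by rewrite norm_conjC z1.
    - by rewrite norm_conjC t1.
    by rewrite -rmorphB norm_conjC.
  have ue2n : `|u - 2 * 'i * sg * t| <= `|sg| ^+ 2 * 2.
    rewrite ue2 normrM normfV !normrM normrN normr1 t1 normr_nat mulr1 mulr1 -expr2.
    rewrite ler_pdivrMr // mulrC.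
    by apply: ler_peMr => //; rewrite mulr_ge0 ?exprn_ge0.
  have hu2 : `|u| ^+ 2 <= 4 * `|sg| ^+ 2.
    have -> : 4 * `|sg| ^+ 2 = (`|sg| * 2) * (`|sg| * 2) by ring.
    by rewrite expr2; apply: ler_pM.
  rewrite gz.
  have -> : (z^*)%R ^+ m * h z - be * sg =
     ((z^*)%R ^+ m - (t^*)%R ^+ m) * h z + (t^*)%R ^+ m * (h z - al * u)
     + (t^*)%R ^+ m * al * (u - 2 * 'i * sg * t) by rewrite /be; ring.
  have b1 : `|((z^*)%R ^+ m - (t^*)%R ^+ m) * h z| <=
            m%:R * (`|al| + K) * (4 * `|sg| ^+ 2).
    rewrite normrM; apply: le_trans (ler_pM _ _ hc hz) _ => //.
    have -> : m%:R * `|u| * ((`|al| + K) * `|u|) = m%:R * (`|al| + K) * `|u| ^+ 2.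
      by ring.
    by apply: ler_wpM2l => //; rewrite mulr_ge0 ?addr_ge0.
  have b2 : `|(t^*)%R ^+ m * (h z - al * u)| <= K * (4 * `|sg| ^+ 2).
    by rewrite normrM tc1 mul1r; apply: le_trans hu _; apply: ler_wpM2l.
  have b3 : `|(t^*)%R ^+ m * al * (u - 2 * 'i * sg * t)| <= `|al| * (`|sg| ^+ 2 * 2).
    by rewrite !normrM tc1 mul1r; apply: ler_wpM2l.
  apply: le_trans (ler_normD _ _) _.
  apply: le_trans (lerD (ler_normD _ _) (lexx _)) _.
  apply: le_trans (lerD (lerD b1 b2) b3) _.
  rewrite -(real_normK sr) /K' le_eqVlt; apply/orP; left; apply/eqP; ring.
have be0 : be = 0.
  apply: (beta_zero _ K' K'0) => s s0 s2.
  have sr : s \is Num.real := gtr0_real s0.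
  exists (g s), (g (-s)).
  have [|g1 e1] := Hg s sr; first by rewrite gtr0_norm.
  have srn : - s \is Num.real by rewrite realN.
  have [|g2 e2] := Hg (-s) srn; first by rewrite normrN gtr0_norm.
  by rewrite mulrN opprK sqrrN in e2.
have nz : (t^*)%R ^+ m * (2 * 'i * t) != 0.
  by rewrite !mulf_neq0 // ?expf_neq0 ?conjC_eq0 ?pnatr_eq0 ?neq0Ci.
apply: (mulIf nz); rewrite mul0r -be0 /be; ring.
Qed.


Lemma circ (sg : C) : sg \is Num.real ->
  1 - 'i * sg != 0 /\ `|1 + 'i * sg| = `|1 - 'i * sg|.
Proof.
move=> sr.
have nv : `|1 - 'i * sg| ^+ 2 = 1 + sg ^+ 2.
  by rewrite -mulrN normC2_rect ?expr1n ?sqrrN // ?realN.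
split.
  rewrite -normr_eq0; apply/eqP => e; move: nv; rewrite e expr0n /= => /eqP.
  have : 0 < 1 + sg ^+ 2 by rewrite -(real_normK sr) ltr_pwDl // exprn_ge0.
  by move=> h /eqP h2; rewrite -h2 ltxx in h.
have -> : 1 + 'i * sg = ((1 - 'i * sg)^*)%R.
  by rewrite rmorphB rmorph1 rmorphM /= conjCi (conj_Creal sr) mulNr opprK.
exact: norm_conjC.
Qed.

Lemma unit_avoid (s : seq C) : exists z : C, `|z| = 1 /\ z \notin s.
Proof.
pose e := fun k : nat => (1 + 'i * k%:R) / (1 - 'i * (k%:R : C)).
have eu : forall k, `|e k| = 1.
  move=> k; have [h1 h2] := circ _ (realn C k).
  by rewrite /e normrM normfV h2 mulfV // normr_eq0.
have einj : injective e.
  move=> k l ekl.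
  have h : forall sg : C, sg \is Num.real ->
      (1 + 'i * sg) / (1 - 'i * sg) + 1 = 2 / (1 - 'i * sg).
    by move=> sg sr; have [h1 _] := circ _ sr; field.
  have : 2 / (1 - 'i * (k%:R : C)) = 2 / (1 - 'i * l%:R).
    by rewrite -!h ?realn // -/(e k) -/(e l) ekl.
  have two0 : (2 : C) != 0 by rewrite pnatr_eq0.
  move/(mulfI two0) /invr_inj.
  move/(congr1 (fun x => 1 - x)); rewrite /= !subKr.
  move/(mulfI (neq0Ci C)) /eqP; rewrite eqr_nat => /eqP //.
pose E := map e (iota 0 (size s).+1).
have uE : uniq E by rewrite map_inj_uniq // iota_uniq.
case: (boolP (all (mem s) E)) => [/allP sub | /allPn [z zE zs]].
  by have := uniq_leq_size uE sub; rewrite size_map size_iota ltnn.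
exists z; split => //.
by move/mapP: zE => [k _ ->]; exact: eu.
Qed.

Lemma pick_d (a b c : C) : 0 < a -> 0 < b -> 0 < c ->
  exists2 d, 0 < d & [/\ d <= a, d <= b & d <= c].
Proof.
move=> a0 b0 c0.
have S0 : 0 < a^-1 + b^-1 + c^-1 by rewrite !addr_gt0 ?invr_gt0.
exists (a^-1 + b^-1 + c^-1)^-1; first by rewrite invr_gt0.
have key : forall x, 0 < x -> x^-1 <= a^-1 + b^-1 + c^-1 ->
    (a^-1 + b^-1 + c^-1)^-1 <= x.
  move=> x x0 h; rewrite -[x]invrK lef_pV2 ?posrE ?invr_gt0 //.

split; apply: key => //.
- by rewrite -addrA lerDl addr_ge0 // ltW // invr_gt0.
- by rewrite addrAC lerDr addr_ge0 // ltW // invr_gt0.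
- by rewrite lerDr addr_ge0 // ltW // invr_gt0.
Qed.

Lemma le_maxl (x y : C) : x \is Num.real -> y \is Num.real -> x <= Num.max x y.
Proof.
move=> xr yr; rewrite /Order.max; case: ifP => [/ltW //|_]; exact: lexx.
Qed.

Lemma le_maxr (x y : C) : x \is Num.real -> y \is Num.real -> y <= Num.max x y.
Proof.
move=> xr yr; rewrite /Order.max; case: ifP => [_|h]; first exact: lexx.
by rewrite real_leNgt // h.
Qed.

Lemma max_real (x y : C) : x \is Num.real -> y \is Num.real -> Num.max x y \is Num.real.
Proof. by move=> xr yr; rewrite /Order.max; case: ifP. Qed.

Lemma nrm3_1 (z1 z2 z3 : C) : `|z1| <= nrm3 z1 z2 z3.
Proof. by apply: le_maxl; rewrite ?max_real ?normr_real. Qed.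
Lemma nrm3_2 (z1 z2 z3 : C) : `|z2| <= nrm3 z1 z2 z3.
Proof.
apply: le_trans (le_maxr _ _ _ _); first (apply: le_maxl); by rewrite ?max_real ?normr_real.
Qed.
Lemma nrm3_3 (z1 z2 z3 : C) : `|z3| <= nrm3 z1 z2 z3.
Proof.
apply: le_trans (le_maxr _ _ _ _); first (apply: le_maxr); by rewrite ?max_real ?normr_real.
Qed.


Lemma main (m n : nat) (a : coef3 R m n) :
  (forall z1 z2 z3 : R[i], `|z1| < 1 -> `|z2| < 1 -> `|z3| < 1 ->
     peval3 a z1 z2 z3 != 0) ->
  no_common_factor a ->
  (exists s : seq (R[i] * R[i] * R[i]), forall z1 z2 z3 : R[i],
     `|z1| = 1 -> `|z2| = 1 -> `|z3| = 1 -> peval3 a z1 z2 z3 = 0 ->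
     (z1, z2, z3) \in s) ->
  forall t1 t2 zeta3 : R[i], `|t1| = 1 -> `|t2| = 1 -> `|zeta3| = 1 ->
  peval3 a t1 t2 zeta3 = 0 ->
  forall t3 : R[i], `|t3| = 1 ->
    nt_limit (phi3 a) t1 t2 t3 (pk (refl3 a) 0 t1 t2 / pk a 0 t1 t2) /\
    `|pk (refl3 a) 0 t1 t2 / pk a 0 t1 t2| = 1.
Proof.
move=> hnz _ [s hs] t1 t2 z3 ht1 ht2 hz3 hp0 t3 ht3.
have r0 : rev_ord (0 : 'I_2) = 1 by apply/val_inj.
have r1 : rev_ord (1 : 'I_2) = 0 by apply/val_inj.
set P1 := pk a 0; set P2 := pk a 1; set Q1 := pk (refl3 a) 1; set Q2 := pk (refl3 a) 0.
have hpE : forall x y w, peval3 a x y w = P1 x y + w * P2 x y.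
  by move=> x y w; rewrite peval3E.
have hqE : forall x y w, peval3 (refl3 a) x y w = Q2 x y + w * Q1 x y.
  by move=> x y w; rewrite peval3E.
have hopen : forall x y, `|x| < 1 -> `|y| < 1 -> `|P2 x y| <= `|P1 x y|.
  move=> x y hx hy; rewrite real_leNgt ?normr_real //; apply/negP => hlt.
  have P2n0 : P2 x y != 0.
    by rewrite -normr_gt0; apply: le_lt_trans hlt.
  have := hnz x y (- P1 x y / P2 x y) hx hy.
  rewrite hpE divfK // addrN eqxx => H; suff : ~~ true by []; apply: H.
  by rewrite normrM normrN normfV ltr_pdivrMr ?normr_gt0 // mul1r.
have hcl : forall x y, `|x| <= 1 -> `|y| <= 1 -> `|P2 x y| <= `|P1 x y|.
  move=> x y hx hy.
  have [K1 [K10 L1]] := T2_lip x y _ (T2_pk x y _ _ a 0).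
  have [K2 [K20 L2]] := T2_lip x y _ (T2_pk x y _ _ a 1).
  rewrite -subr_le0; apply: (small_le _ ((K1 + K2) * 2)); first by rewrite mulr_ge0 ?addr_ge0.
  move=> e e0 e2.
  have e1 : e <= 1.
    by apply: le_trans e2; rewrite ler_peMr ?ler1n // ltW.
  have hu : `|- (e * x)| + `|- (e * y)| <= e * 2.
    rewrite !normrN !normrM gtr0_norm // -mulrDr; apply: ler_wpM2l; first exact: ltW.
    exact: lerD.
  have hu1 := le_trans hu e2.
  have inb : forall v, `|v| <= 1 -> `|v + - (e * v)| < 1.
    move=> v hv; have -> : v + - (e * v) = (1 - e) * v by ring.
    rewrite normrM ger0_norm ?subr_ge0 //.
    apply: le_lt_trans (ler_wpM2l _ hv) _; first by rewrite subr_ge0.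
    by rewrite mulr1 gtrDl oppr_lt0.
  have a2 := hopen _ _ (inb x hx) (inb y hy).
  have a1 := lerB_dist (P2 x y) (P2 (x + - (e * x)) (y + - (e * y))).
  have a3 := lerB_dist (P1 (x + - (e * x)) (y + - (e * y))) (P1 x y).
  have b1 := L1 _ _ hu1; have b2 := L2 _ _ hu1.
  rewrite distrC in a1.
  have -> : `|P2 x y| - `|P1 x y| =
    (`|P2 x y| - `|P2 (x + - (e * x)) (y + - (e * y))|) +
    (`|P2 (x + - (e * x)) (y + - (e * y))| - `|P1 (x + - (e * x)) (y + - (e * y))|) +
    (`|P1 (x + - (e * x)) (y + - (e * y))| - `|P1 x y|) by ring.
  rewrite -subr_le0 in a2.
  apply: le_trans (lerD (lerD (le_trans a1 b2) a2) (le_trans a3 b1)) _.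
  rewrite addr0 -mulrDl [K2 + K1]addrC -mulrA; apply: ler_wpM2l.
    by rewrite addr_ge0.
  by rewrite [2 * e]mulrC.
have hz : P1 t1 t2 + z3 * P2 t1 t2 = 0 by rewrite -hpE.
have hc1 : `|t1| <= 1 by rewrite ht1.
have hc2 : `|t2| <= 1 by rewrite ht2.
have P1n0 : P1 t1 t2 != 0.
  apply/negP => /eqP h0.
  have h20 : P2 t1 t2 = 0.
    by apply/eqP; rewrite -normr_le0 -(normr0 C) -h0; exact: hcl.
  have [w [hw1 hw2]] := unit_avoid (map (fun q : C * C * C => q.2) s).
  have hin := hs t1 t2 w ht1 ht2 hw1 (ltac:(by rewrite hpE h0 h20 mulr0 addr0)).
  by move/negP: hw2; apply; exact: (map_f (fun q : C * C * C => q.2) hin).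
have hPP : `|P1 t1 t2| = `|P2 t1 t2|.
  have : P1 t1 t2 = - (z3 * P2 t1 t2) by apply/eqP; rewrite -addr_eq0 hz.
  by move=> ->; rewrite normrN normrM hz3 mul1r.
have hQA : `|Q2 t1 t2| = `|P1 t1 t2|.
  by rewrite /Q2 pk_refl // r0 !normrM (normrX m t1) (normrX n t2) ht1 ht2 !expr1n !mul1r norm_conjC hPP.
have A0 : 0 < `|P1 t1 t2| by rewrite normr_gt0.
split; last by rewrite normf_div hQA mulfV // normr_eq0.
pose F := fun x y => P1 x y * Q1 x y - P2 x y * Q2 x y.
have TF : T2 t1 t2 F.
  apply: (T2_ext _ _ (fun x y => P1 x y * Q1 x y + (-1) * (P2 x y * Q2 x y))).
    by move=> x y; rewrite /F mulN1r.
  apply: T2_add; first by apply: T2_mul; exact: T2_pk.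
  apply: T2_mul; first exact: T2_const.
  by apply: T2_mul; exact: T2_pk.
have Ftor : forall x y, `|x| = 1 -> `|y| = 1 ->
    F x y = x ^+ m * y ^+ n * (`|P1 x y| ^+ 2 - `|P2 x y| ^+ 2).
  move=> x y hx hy; rewrite /F /Q1 /Q2 !pk_refl // r0 r1 !normCK -/P1 -/P2; ring.
have Ft0 : F t1 t2 = 0 by rewrite Ftor // hPP subrr mulr0.
have [al1 [al2 [K [K0 HF]]]] := TF.
have HF' : forall u1 u2, `|u1| + `|u2| <= 1 ->
    `|F (t1 + u1) (t2 + u2) - (al1 * u1 + al2 * u2)| <= K * (`|u1| + `|u2|) ^+ 2.
  by move=> u1 u2 hu; have := HF u1 u2 hu; rewrite Ft0 subr0.
have t1n0 : t1 != 0 by rewrite -normr_eq0 ht1 oner_eq0.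
have t2n0 : t2 != 0 by rewrite -normr_eq0 ht2 oner_eq0.
have Gnn : forall x y, `|x| = 1 -> `|y| = 1 -> 0 <= `|P1 x y| ^+ 2 - `|P2 x y| ^+ 2.
  move=> x y hx hy; rewrite subr_ge0 !expr2.
  have := hcl x y (ltac:(by rewrite hx)) (ltac:(by rewrite hy)).
  by move=> h; apply: ler_pM.
have al10 : al1 = 0.
  have H1 : forall u, `|u| <= 1 -> `|F (t1 + u) t2 * (t2^*)%R ^+ n
      - al1 * (t2^*)%R ^+ n * u| <= K * `|u| ^+ 2.
    move=> u hu; have := HF' u 0; rewrite normr0 !addr0 mulr0 addr0 => /(_ hu).
    have -> : F (t1 + u) t2 * (t2^*)%R ^+ n - al1 * (t2^*)%R ^+ n * u =
       (F (t1 + u) t2 - al1 * u) * (t2^*)%R ^+ n by ring.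
    by rewrite normrM (normrX n) norm_conjC ht2 expr1n mulr1.
  have H2 : forall z, `|z| = 1 -> 0 <= (z^*)%R ^+ m * (F z t2 * (t2^*)%R ^+ n).
    move=> z hzz; rewrite Ftor //.
    have -> : (z^*)%R ^+ m * (z ^+ m * t2 ^+ n * (`|P1 z t2| ^+ 2 - `|P2 z t2| ^+ 2)
       * (t2^*)%R ^+ n) = ((z^*)%R * z) ^+ m * (t2 * (t2^*)%R) ^+ n *
       (`|P1 z t2| ^+ 2 - `|P2 z t2| ^+ 2) by rewrite !exprMn; ring.
    by rewrite -normCKC -normCK hzz ht2 !expr1n !mul1r; exact: Gnn.
  have := deriv_zero (fun x => F x t2 * (t2^*)%R ^+ n) t1 (al1 * (t2^*)%R ^+ n) K m
    ht1 K0 H1 H2.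
  move/eqP; rewrite mulf_eq0 expf_eq0 conjC_eq0 (negbTE t2n0) andbF orbF.
  by move/eqP.
have al20 : al2 = 0.
  have H1 : forall u, `|u| <= 1 -> `|F t1 (t2 + u) * (t1^*)%R ^+ m
      - al2 * (t1^*)%R ^+ m * u| <= K * `|u| ^+ 2.
    move=> u hu; have := HF' 0 u; rewrite normr0 addr0 mulr0 !add0r => /(_ hu).
    have -> : F t1 (t2 + u) * (t1^*)%R ^+ m - al2 * (t1^*)%R ^+ m * u =
       (F t1 (t2 + u) - al2 * u) * (t1^*)%R ^+ m by ring.
    by rewrite normrM (normrX m) norm_conjC ht1 expr1n mulr1.
  have H2 : forall z, `|z| = 1 -> 0 <= (z^*)%R ^+ n * (F t1 z * (t1^*)%R ^+ m).
    move=> z hzz; rewrite Ftor //.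
    have -> : (z^*)%R ^+ n * (t1 ^+ m * z ^+ n * (`|P1 t1 z| ^+ 2 - `|P2 t1 z| ^+ 2)
       * (t1^*)%R ^+ m) = ((z^*)%R * z) ^+ n * (t1 * (t1^*)%R) ^+ m *
       (`|P1 t1 z| ^+ 2 - `|P2 t1 z| ^+ 2) by rewrite !exprMn; ring.
    by rewrite -normCKC -normCK hzz ht1 !expr1n !mul1r; exact: Gnn.
  have := deriv_zero (fun y => F t1 y * (t1^*)%R ^+ m) t2 (al2 * (t1^*)%R ^+ m) K n
    ht2 K0 H1 H2.
  move/eqP; rewrite mulf_eq0 expf_eq0 conjC_eq0 (negbTE t1n0) andbF orbF.
  by move/eqP.
have HFq : forall u1 u2, `|u1| + `|u2| <= 1 ->
    `|F (t1 + u1) (t2 + u2)| <= K * (`|u1| + `|u2|) ^+ 2.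
  by move=> u1 u2 hu; have := HF' u1 u2 hu; rewrite al10 al20 !mul0r addr0 subr0.
move=> c c0 eps e0.
set A := `|P1 t1 t2|.
have An0 : A != 0 by rewrite gt_eqF.
have [KP [KP0 LP]] := T2_lip t1 t2 _ (T2_pk t1 t2 _ _ a 0).
have [KQ [KQ0 LQ]] := T2_lip t1 t2 _ (T2_pk t1 t2 _ _ (refl3 a) 0).
pose M := (KP + KQ) * 2 / A + K * c * 8 / A ^+ 2 + 1.
have M0 : 0 < M.
  by rewrite /M ltr_wpDl // addr_ge0 // divr_ge0 ?mulr_ge0 ?addr_ge0 ?exprn_ge0 // ltW.
have Me : 0 < eps / (M * 2).
  by rewrite divr_gt0 // mulr_gt0.
have [d d0 [d1 d2 d3]] := pick_d (2^-1) (A / (KP * 4 + 1)) (eps / (M * 2))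
   (ltac:(by rewrite invr_gt0 ltr0n)) (ltac:(by rewrite divr_gt0 // ltr_wpDl ?mulr_ge0)) Me.
exists d => // x y w hx hy hw hnt hd.
set N := nrm3 (x - t1) (y - t2) (w - t3) in hnt hd.
have hN1 : `|x - t1| <= N := nrm3_1 _ _ _.
have hN2 : `|y - t2| <= N := nrm3_2 _ _ _.
have hw3 : `|w| <= nrm3 x y w := nrm3_3 _ _ _.
set dl := `|x - t1| + `|y - t2|.
have dl0 : 0 <= dl by rewrite addr_ge0.
have hdl : dl <= N * 2.
  have -> : N * 2 = N + N by ring.
  exact: lerD.
have d2' : d * 2 <= 1.
  have : d <= 1 / 2 by rewrite mul1r.
  by rewrite ler_pdivlMr.
have dld : dl <= d * 2 := le_trans hdl (ler_wpM2r (ler0n _ _) (ltW hd)).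
have dl1 : dl <= 1 := le_trans dld d2'.
have hP : `|P1 x y - P1 t1 t2| <= KP * dl.
  by have := LP (x - t1) (y - t2) dl1; rewrite [t1 + _]addrC subrK [t2 + _]addrC subrK.
have hQ : `|Q2 x y - Q2 t1 t2| <= KQ * dl.
  by have := LQ (x - t1) (y - t2) dl1; rewrite [t1 + _]addrC subrK [t2 + _]addrC subrK.
have hFb : `|F x y| <= K * dl ^+ 2.
  by have := HFq (x - t1) (y - t2) dl1; rewrite [t1 + _]addrC subrK [t2 + _]addrC subrK.
have KPd : KP * dl * 2 <= A.
  have : d * (KP * 4 + 1) <= A by rewrite -ler_pdivlMr // ltr_wpDl ?mulr_ge0.
  apply: le_trans.
  apply: le_trans (_ : KP * (d * 2) * 2 <= _).
    by apply: ler_wpM2r => //; apply: ler_wpM2l.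
  have -> : KP * (d * 2) * 2 = d * (KP * 4) by ring.
  by apply: ler_wpM2l; [exact: ltW | rewrite lerDl].
have P1xy : A <= `|P1 x y| * 2.
  have h1 : A - `|P1 x y| <= KP * dl.
    apply: le_trans (lerB_dist _ _) _; rewrite distrC; exact: hP.
  have h2 : (A - `|P1 x y|) * 2 <= A := le_trans (ler_wpM2r (ler0n _ _) h1) KPd.
  rewrite -subr_ge0; have -> : `|P1 x y| * 2 - A = A - (A - `|P1 x y|) * 2 by ring.
  by rewrite subr_ge0.
have P1xy0 : 0 < `|P1 x y|.
  rewrite normr_gt0; apply/eqP => h0; move: P1xy; rewrite h0 normr0 mul0r => h.
  by have := lt_le_trans A0 h; rewrite ltxx.
have P1xyn0 : P1 x y != 0 by rewrite -normr_gt0.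
have om : 0 < 1 - `|w| by rewrite subr_gt0.
have hpb : `|P1 x y| * (1 - `|w|) <= `|peval3 a x y w|.
  rewrite hpE mulrBr mulr1; apply: le_trans _ (lerB_normD _ _).
  apply: lerB => //; rewrite normrM mulrC; apply: ler_wpM2r => //; exact: hopen.
have pn0 : peval3 a x y w != 0 := hnz x y w hx hy hw.
have p0 : 0 < `|peval3 a x y w| by rewrite normr_gt0.
have hcw : dl <= c * (1 - `|w|) * 2.
  apply: le_trans hdl _; apply: ler_wpM2r => //; apply: le_trans hnt _.
  by apply: ler_wpM2l; [exact: ltW | apply: lerB].
have eqphi : phi3 a x y w - Q2 t1 t2 / P1 t1 t2 =
    (Q2 x y / P1 x y - Q2 t1 t2 / P1 t1 t2) + w * F x y / (P1 x y * peval3 a x y w).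
  rewrite /phi3 hqE /F; move: pn0; rewrite hpE => pn0; field.
  by rewrite pn0 P1xyn0 P1n0.
rewrite eqphi.
have T1 : `|Q2 x y / P1 x y - Q2 t1 t2 / P1 t1 t2| <= (KP + KQ) * 2 / A * dl.
  have -> : Q2 x y / P1 x y - Q2 t1 t2 / P1 t1 t2 =
     ((Q2 x y - Q2 t1 t2) * P1 t1 t2 - Q2 t1 t2 * (P1 x y - P1 t1 t2)) /
     (P1 x y * P1 t1 t2) by field; rewrite P1xyn0 P1n0.
  rewrite normf_div normrM -/A ler_pdivrMr ?mulr_gt0 //.
  apply: le_trans (ler_normB _ _) _.
  rewrite !normrM hQA -/A.
  have X1 : `|Q2 x y - Q2 t1 t2| * A + A * `|P1 x y - P1 t1 t2| <= (KP + KQ) * dl * A.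
    apply: le_trans (lerD (ler_wpM2r (ltW A0) hQ) (ler_wpM2l (ltW A0) hP)) _.
    by rewrite le_eqVlt; apply/orP; left; apply/eqP; ring.
  apply: le_trans X1 _.
  have -> : (KP + KQ) * 2 / A * dl * (`|P1 x y| * A) = (KP + KQ) * dl * (`|P1 x y| * 2).
    by field.
  by apply: ler_wpM2l => //; rewrite mulr_ge0 ?addr_ge0.
have T2b : `|w * F x y / (P1 x y * peval3 a x y w)| <= K * c * 8 / A ^+ 2 * dl.
  rewrite normf_div normrM ler_pdivrMr; last by rewrite normrM mulr_gt0.
  have s1 : `|w| * `|F x y| <= K * dl ^+ 2.
    by apply: le_trans hFb; apply: ler_piMl => //; exact: ltW.
  have s2 : K * dl ^+ 2 <= K * c * 2 * dl * (1 - `|w|).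
    have -> : K * c * 2 * dl * (1 - `|w|) = K * dl * (c * (1 - `|w|) * 2) by ring.
    by rewrite [dl ^+ 2]expr2 [K * (_ * _)]mulrA; apply: ler_wpM2l => //; rewrite mulr_ge0.
  apply: le_trans s1 _; apply: le_trans s2 _.
  have sq : A * A <= `|P1 x y| * 2 * (`|P1 x y| * 2).
    by apply: ler_pM => //; exact: ltW.
  have C0 : 0 <= K * c * 8 / A ^+ 2 * dl * (1 - `|w|) / 4.
    by rewrite !mulr_ge0 ?invr_ge0 ?exprn_ge0 // ltW.
  apply: le_trans (_ : _ <= K * c * 8 / A ^+ 2 * dl * (`|P1 x y| * (`|P1 x y| * (1 - `|w|))))
     _; last first.
    apply: ler_wpM2l; first by rewrite !mulr_ge0 ?invr_ge0 ?exprn_ge0 // ltW.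
    by rewrite normrM; apply: ler_wpM2l => //.
  have -> : K * c * 2 * dl * (1 - `|w|) = (K * c * 8 / A ^+ 2 * dl * (1 - `|w|) / 4) * (A * A).
    by field.
  have -> : K * c * 8 / A ^+ 2 * dl * (`|P1 x y| * (`|P1 x y| * (1 - `|w|))) =
     (K * c * 8 / A ^+ 2 * dl * (1 - `|w|) / 4) * (`|P1 x y| * 2 * (`|P1 x y| * 2)).
    by field.
  by apply: ler_wpM2l.
apply: le_lt_trans (ler_normD _ _) _.
apply: le_lt_trans (lerD T1 T2b) _.
rewrite -mulrDl.
apply: le_lt_trans (_ : _ <= M * dl) _.
  by apply: ler_wpM2r => //; rewrite /M lerDl.
apply: le_lt_trans (ler_wpM2l (ltW M0) hdl) _.
apply: lt_le_trans (_ : _ < M * (d * 2)) _.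
  by rewrite ltr_pM2l // ltr_pM2r.
have : d * (M * 2) <= eps by rewrite -ler_pdivlMr // mulr_gt0.
by rewrite mulrCA mulrA.
Qed.


End Aux.

Theorem corollary4p3 (R : realType) (m n : nat) (a : coef3 R m n) :
  (* p has no zeros on the tridisk *)
  (forall z1 z2 z3 : R[i], `|z1| < 1 -> `|z2| < 1 -> `|z3| < 1 ->
     peval3 a z1 z2 z3 != 0) ->
  (* p and tilde p have no common factor *)
  no_common_factor a ->
  (* Z_p /\ T^3 is finite *)
  (exists s : seq (R[i] * R[i] * R[i]), forall z1 z2 z3 : R[i],
     `|z1| = 1 -> `|z2| = 1 -> `|z3| = 1 -> peval3 a z1 z2 z3 = 0 ->
     (z1, z2, z3) \in s) ->
  forall t1 t2 zeta3 : R[i], `|t1| = 1 -> `|t2| = 1 -> `|zeta3| = 1 ->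
  peval3 a t1 t2 zeta3 = 0 ->
  forall t3 : R[i], `|t3| = 1 ->
    nt_limit (phi3 a) t1 t2 t3 (pk (refl3 a) 0 t1 t2 / pk a 0 t1 t2) /\
    `|pk (refl3 a) 0 t1 t2 / pk a 0 t1 t2| = 1.
Proof. exact: main. Qed.
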